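(* Let $A\ge 1$ and $0<\sigma<1$. Let $W(\sigma,A)$ be as in the context, let ${}_2F_1(1,2A+2,2A+3,\sigma)=(2A+2)\sum_{n\ge0}\frac{\sigma^n}{n+2A+2}$, and let $Q(\sigma,A)=\sum_{i=0}^{11}q_i(\sigma)A^{11-i}(1-\sigma)^{11-i}$ with $q_0=64$, $q_1=32(4+7\sigma)$, $q_2=80(-3+13\sigma)$, $q_3=48(-12+3\sigma+39\sigma^2-17\sigma^3)$, $q_4=12(17-278\sigma+400\sigma^2-90\sigma^3-65\sigma^4)$, $q_5=6(980+1365\sigma+424\sigma^2+1374\sigma^3-876\sigma^4+109\sigma^5)$, $q_6=35363+88857\sigma+75432\sigma^2+45698\sigma^3-1965\sigma^4-2715\sigma^5+1250\sigma^6$, $q_7=100336+279172\sigma+377163\sigma^2+267688\sigma^3+118786\sigma^4-12360\sigma^5+2611\sigma^6+244\sigma^7$, $q_8=2(74901+220667\sigma+395067\sigma^2+388137\sigma^3+222947\sigma^4+77061\sigma^5-2895\sigma^6+1355\sigma^7-240\sigma^8)$, $q_9=3(40659+122280\sigma+287397\sigma^2+350940\sigma^3+284873\sigma^4+126322\sigma^5+37701\sigma^6+724\sigma^7+206\sigma^8-102\sigma^9)$, $q_{10}=9(5673+16595\sigma+51926\sigma^2+83180\sigma^3+83930\sigma^4+50678\sigma^5+17870\sigma^6+4994\sigma^7+155\sigma^8+5\sigma^9-6\sigma^{10})$, $q_{11}=27(315+840\sigma+3465\sigma^2+9576\sigma^3+6510\sigma^4+9864\sigma^5+3150\sigma^6+1000\sigma^7+279\sigma^8+\sigma^{10})$.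 Define $$\widetilde H(\sigma,A)=\frac{12}{35}\sigma^2\left\{\frac{Q(\sigma,A)}{(1-\sigma)^3W(\sigma,A)^3}-A(A-1)(A^2-1)(4A^2-1)(4A^2-9)\frac{(1-\sigma)^6}{W(\sigma,A)^2}\,{}_2F_1(1,2A+2,2A+3,\sigma)\right\}.$$ Then for every $a>0$, $\lambda\ge0$ with $A=\sqrt{1+3\lambda/a^2}$, the function $H(S)=a^3\widetilde H(e^{-aS},A)$ is the unique solution on $(0,\infty)$ of $$4Y(S,a,\lambda)H(S)+\Bigl(\tfrac{d}{dS}Y(S,a,\lambda)\Bigr)^2+6H'(S)=0$$ satisfying $H(S)\to0$ as $S\to\infty$, where $Y$ is as in the context. Moreover $\widetilde H(\sigma,A)=\frac{108\,\sigma^2}{(A+1)(2A+1)^2}+O(\sigma^3)$ as $\sigma\to0$.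
   Context: $W(\sigma,A)=4A^3(1-\sigma)^3+12A^2(1-\sigma)^2(1+\sigma)+A(1-\sigma)(11+38\sigma+11\sigma^2)+3(1+\sigma)(1+8\sigma+\sigma^2)$, $U(\sigma,A)=2A^2(1-\sigma)^2+5A(1-\sigma)(1+\sigma)+3(1+3\sigma+\sigma^2)$, and with $\sigma=e^{-aS}$, $Y(S,a,\lambda)=a\bigl(-3A-36\,\sigma U(\sigma,A)/((1-\sigma)W(\sigma,A))\bigr)$. *)

(* Defs.v *)
From Stdlib Require Import Reals Lra ClassicalEpsilon.
Open Scope R_scope.

Definition W (s A : R) : R :=
  4 * A^3 * (1 - s)^3 + 12 * A^2 * (1 - s)^2 * (1 + s)
  + A * (1 - s) * (11 + 38 * s + 11 * s^2) + 3 * (1 + s) * (1 + 8 * s + s^2).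

Definition U (s A : R) : R :=
  2 * A^2 * (1 - s)^2 + 5 * A * (1 - s) * (1 + s) + 3 * (1 + 3 * s + s^2).

Definition Apar (a lam : R) : R := sqrt (1 + 3 * lam / a^2).

Definition Y (S a lam : R) : R :=
  let A := Apar a lam in
  let s := exp (- (a * S)) in
  a * (- 3 * A - 36 * s * U s A / ((1 - s) * W s A)).

(* The value of the series sum_{n>=0} s^n/(n+2A+2) (chosen by classical
   choice; it is the actual sum whenever the series converges, e.g. 0<s<1). *)
Definition ser21 (s A : R) : R :=
  epsilon (inhabits 0)
    (fun l => infinite_sum (fun n => s ^ n / (INR n + 2 * A + 2)) l).

Definition F21 (s A : R) : R := (2 * A + 2) * ser21 s A.

Definition q (i : nat) (s : R) : R :=
  match i with
  | 0%nat => 64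
  | 1%nat => 32 * (4 + 7 * s)
  | 2%nat => 80 * (-3 + 13 * s)
  | 3%nat => 48 * (-12 + 3 * s + 39 * s^2 - 17 * s^3)
  | 4%nat => 12 * (17 - 278 * s + 400 * s^2 - 90 * s^3 - 65 * s^4)
  | 5%nat => 6 * (980 + 1365 * s + 424 * s^2 + 1374 * s^3 - 876 * s^4 + 109 * s^5)
  | 6%nat => 35363 + 88857 * s + 75432 * s^2 + 45698 * s^3 - 1965 * s^4
             - 2715 * s^5 + 1250 * s^6
  | 7%nat => 100336 + 279172 * s + 377163 * s^2 + 267688 * s^3 + 118786 * s^4
             - 12360 * s^5 + 2611 * s^6 + 244 * s^7
  | 8%nat => 2 * (74901 + 220667 * s + 395067 * s^2 + 388137 * s^3
             + 222947 * s^4 + 77061 * s^5 - 2895 * s^6 + 1355 * s^7 - 240 * s^8)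
  | 9%nat => 3 * (40659 + 122280 * s + 287397 * s^2 + 350940 * s^3
             + 284873 * s^4 + 126322 * s^5 + 37701 * s^6 + 724 * s^7
             + 206 * s^8 - 102 * s^9)
  | 10%nat => 9 * (5673 + 16595 * s + 51926 * s^2 + 83180 * s^3 + 83930 * s^4
             + 50678 * s^5 + 17870 * s^6 + 4994 * s^7 + 155 * s^8 + 5 * s^9
             - 6 * s^10)
  | 11%nat => 27 * (315 + 840 * s + 3465 * s^2 + 9576 * s^3 + 6510 * s^4
             + 9864 * s^5 + 3150 * s^6 + 1000 * s^7 + 279 * s^8 + s^10)
  | _ => 0
  end.

Definition Q (s A : R) : R :=
  sum_f_R0 (fun i => q i s * A ^ (11 - i) * (1 - s) ^ (11 - i)) 11.

Definition Htilde (s A : R) : R :=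
  12 / 35 * s^2 *
  (Q s A / ((1 - s)^3 * (W s A)^3)
   - A * (A - 1) * (A^2 - 1) * (4 * A^2 - 1) * (4 * A^2 - 9)
     * (1 - s)^6 / (W s A)^2 * F21 s A).

Definition Hsol (a lam S : R) : R := a^3 * Htilde (exp (- (a * S))) (Apar a lam).

Definition solves_ode (a lam : R) (G : R -> R) : Prop :=
  forall S, 0 < S -> exists dY dG,
    derivable_pt_lim (fun t => Y t a lam) S dY /\
    derivable_pt_lim G S dG /\
    4 * Y S a lam * G S + dY^2 + 6 * dG = 0.

Definition tends_to_0_at_infty (G : R -> R) : Prop :=
  forall eps, 0 < eps -> exists M, forall S, M < S -> Rabs (G S) < eps.

(* Main.v *)
Require Import Defs.
From Stdlib Require Import Reals Lra ClassicalEpsilon.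
From Coquelicot Require Import Coquelicot.
Open Scope R_scope.

Definition ca (A : R) (n : nat) : R := / (INR n + 2 * A + 2).

Lemma ca_pos A n : 0 < A -> 0 < INR n + 2 * A + 2.
Proof. intros; pose proof (pos_INR n); lra. Qed.

Lemma pow_le1 x n : 0 <= x <= 1 -> x ^ n <= 1.
Proof. intros H; induction n; simpl; [lra|]. pose proof (pow_le x n (proj1 H)). nra. Qed.

Lemma rad_ca A x : 0 < A -> Rabs x < 1 -> Rbar_lt (Rabs x) (CV_radius (ca A)).
Proof.
  intros HA Hx.
  destruct (CV_radius_bounded (ca A)) as [Hub _].
  assert (Hr : Rbar_le (Finite ((Rabs x + 1) / 2)) (CV_radius (ca A))).
  { apply Hub. exists (/ (2 * A + 2)). intros n.
    unfold ca. pose proof (ca_pos A n HA).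
    assert (0 <= (Rabs x + 1) / 2 < 1) by (pose proof (Rabs_pos x); lra).
    rewrite Rabs_mult, Rabs_inv, <- RPow_abs.
    rewrite (Rabs_pos_eq (INR n + 2 * A + 2)) by lra.
    rewrite (Rabs_pos_eq ((Rabs x + 1) / 2)) by lra.
    assert (Hp: ((Rabs x + 1) / 2) ^ n <= 1) by (apply pow_le1; lra).
    pose proof (pow_le ((Rabs x + 1) / 2) n ltac:(lra)).
    assert (/ (INR n + 2 * A + 2) <= / (2 * A + 2)).
    { apply Rinv_le_contravar; [lra|]. pose proof (pos_INR n); lra. }
    pose proof (Rinv_0_lt_compat _ H).
    nra. }
  eapply Rbar_lt_le_trans; [|exact Hr]. simpl. lra.
Qed.

Lemma ser21_eq A s : 0 < A -> Rabs s < 1 -> ser21 s A = PSeries (ca A) s.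
Proof.
  intros HA Hs.
  assert (H1 : infinite_sum (fun n => s ^ n / (INR n + 2 * A + 2)) (PSeries (ca A) s)).
  { apply is_series_Reals.
    pose proof (PSeries_correct _ _ (CV_radius_inside _ _ (rad_ca A s HA Hs))) as H.
    unfold is_pseries in H.
    eapply is_series_ext; [|exact H]. intros n. simpl.
    rewrite pow_n_pow. unfold scal; simpl. unfold mult; simpl. unfold ca, Rdiv. ring. }
  unfold ser21.
  apply (uniqueness_sum (fun n => s ^ n / (INR n + 2 * A + 2))); [|exact H1].
  apply epsilon_spec. eauto.
Qed.

Lemma ser_ode A s : 0 < A -> Rabs s < 1 ->
  s * PSeries (PS_derive (ca A)) s + (2 * A + 2) * PSeries (ca A) s = / (1 - s).
Proof.
  intros HA Hs.
  pose proof (rad_ca A s HA Hs) as Hr.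
  pose proof (PSeries_correct _ _ (ex_pseries_derive _ _ Hr)) as HD.
  pose proof (PSeries_correct _ _ (CV_radius_inside _ _ Hr)) as HP.
  apply is_pseries_incr_1 in HD.
  apply (is_pseries_scal (2 * A + 2)) in HP; [|unfold mult; simpl; ring].
  pose proof (is_pseries_plus _ _ _ _ _ HD HP) as H.
  unfold is_pseries in H.
  assert (Hc : forall n, PS_plus (PS_incr_1 (PS_derive (ca A))) (PS_scal (2 * A + 2) (ca A)) n = 1).
  { intros n. destruct n.
    - unfold PS_plus, PS_scal, PS_incr_1, PS_derive, ca, plus, scal; simpl; unfold mult, zero, one; simpl.
      change (0 + (2 * A + 2) * / (0 + 2 * A + 2) = 1). field. lra.
    - pose proof (ca_pos A (S n) HA).
      unfold PS_plus, PS_scal, PS_incr_1, PS_derive, ca, plus, scal; cbn -[INR]; unfold mult; cbn -[INR].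
      rewrite S_INR in *. field. lra. }
  assert (Hg : is_series (fun n => s ^ n)
     (plus (scal s (PSeries (PS_derive (ca A)) s)) (scal (2 * A + 2) (PSeries (ca A) s)))).
  { eapply is_series_ext; [|exact H]. intros n. cbv beta. rewrite Hc, pow_n_pow.
    unfold scal; simpl; unfold mult; simpl. ring. }
  pose proof (is_series_unique _ _ Hg) as E1.
  pose proof (is_series_unique _ _ (is_series_geom s Hs)) as E2.
  rewrite E1 in E2. rewrite <- E2. unfold plus, scal; simpl; unfold mult; simpl. ring.
Qed.

Lemma ser21_derive A s : 0 < A -> Rabs s < 1 ->
  is_derive (fun x => ser21 x A) s (PSeries (PS_derive (ca A)) s).
Proof.
  intros HA Hs.
  apply (is_derive_ext_loc (PSeries (ca A))).
  - assert (Hd : 0 < 1 - Rabs s) by lra.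
    exists (mkposreal _ Hd). intros y Hy. simpl in Hy.
    unfold ball in Hy; simpl in Hy; unfold AbsRing_ball, abs, minus, plus, opp in Hy; simpl in Hy.
    symmetry. apply ser21_eq; auto.
    pose proof (Rabs_triang_inv y s). unfold Rminus in *. lra.
  - apply is_derive_PSeries, rad_ca; auto.
Qed.

Lemma W_pos s A : 1 <= A -> 0 < s < 1 -> 0 < W s A.
Proof.
  intros HA Hs. unfold W.
  assert (0 < 1 - s) by lra.
  assert (0 < A^3 * (1-s)^3) by (apply Rmult_lt_0_compat; apply pow_lt; lra).
  assert (0 < A^2 * (1-s)^2 * (1 + s)) by (apply Rmult_lt_0_compat; [apply Rmult_lt_0_compat|]; try apply pow_lt; lra).
  assert (0 < A * (1-s) * (11 + 38 * s + 11 * s^2)) by (apply Rmult_lt_0_compat; [apply Rmult_lt_0_compat|]; nra).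
  assert (0 < (1 + s) * (1 + 8 * s + s^2)) by (apply Rmult_lt_0_compat; nra).
  lra.
Qed.

Lemma U_pos s A : 1 <= A -> 0 < s < 1 -> 0 < U s A.
Proof.
  intros HA Hs. unfold U.
  assert (0 < 1 - s) by lra.
  assert (0 < A^2 * (1-s)^2) by (apply Rmult_lt_0_compat; apply pow_lt; lra).
  assert (0 < A * (1-s) * (1 + s)) by (apply Rmult_lt_0_compat; [apply Rmult_lt_0_compat|]; nra).
  nra.
Qed.

Ltac nz s A := repeat split;
  repeat (apply Rmult_integral_contrapositive_currified); try lra;
  try (eexists; eassumption);
  match goal with |- ?X <> 0 =>
    let HE := fresh in assert (HE : X = W s A) by (unfold W; ring); rewrite HE; lra end.

Lemma ode_core a A S : 0 < a -> 1 <= A -> 0 < S ->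
  let Yf := fun t => a * (- 3 * A - 36 * exp (- (a * t)) * U (exp (- (a * t))) A /
                 ((1 - exp (- (a * t))) * W (exp (- (a * t))) A)) in
  let Hf := fun t => a^3 * Htilde (exp (- (a * t))) A in
  exists dY dG, derivable_pt_lim Yf S dY /\ derivable_pt_lim Hf S dG /\
    4 * Yf S * Hf S + dY^2 + 6 * dG = 0.
Proof.
  intros Ha HA HS Yf Hf.
  set (s := exp (- (a * S))).
  assert (Hs : 0 < s < 1).
  { split. apply exp_pos. unfold s. rewrite <- exp_0. apply exp_increasing. nra. }
  pose proof (W_pos s A HA Hs) as HW. pose proof (U_pos s A HA Hs) as HU.
  assert (HA0 : 0 < A) by lra.
  assert (Hs1 : Rabs s < 1) by (rewrite Rabs_pos_eq; lra).
  pose proof (ser_ode A s HA0 Hs1) as Hode.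
  pose proof (ser21_derive A s HA0 Hs1) as Hd.
  rewrite <- (ser21_eq A s HA0 Hs1) in Hode.
  set (gp := PSeries (PS_derive (ca A)) s) in *.
  set (g := ser21 s A) in *.
  eexists; eexists; split; [|split].
  - apply is_derive_Reals. unfold Yf, U, W. auto_derive.
    + fold s. nz s A.
    + reflexivity.
  - apply is_derive_Reals. unfold Hf, Htilde, Q, F21, W. cbn [sum_f_R0 q Nat.sub].
    auto_derive.
    + fold s. nz s A.
    + reflexivity.
  - unfold Yf, Hf, Htilde, Q, F21. cbn [sum_f_R0 q Nat.sub].
    fold s. fold g.
    match goal with |- context [Derive ?f ?x] => replace (Derive f x) with gp by (symmetry; apply is_derive_unique; exact Hd) end.
    assert (E : gp = (/ (1 - s) - (2 * A + 2) * g) / s) by (rewrite <- Hode; field; lra).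
    rewrite E. unfold U, W in *. simpl pow in *.
    field. nz s A.
Qed.



Definition Ef (A s : R) : R :=
  Q s A / ((1 - s)^3 * (W s A)^3)
   - A * (A - 1) * (A^2 - 1) * (4 * A^2 - 1) * (4 * A^2 - 9)
     * (1 - s)^6 / (W s A)^2 * F21 s A.

Lemma W0_pos A : 1 <= A -> 0 < W 0 A.
Proof. intros. unfold W. nra. Qed.

Lemma asym A : 1 <= A ->
  exists C delta, 0 < delta /\
    forall s, 0 < s < delta ->
      Rabs (Htilde s A - 108 * s^2 / ((A + 1) * (2 * A + 1)^2)) <= C * s^3.
Proof.
  intros HA.
  assert (HA0 : 0 < A) by lra.
  pose proof (W0_pos A HA) as HW.
  assert (H0 : Rabs 0 < 1) by (rewrite Rabs_R0; lra).
  pose proof (ser21_derive A 0 HA0 H0) as Hd.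
  assert (HE : exists d, is_derive (Ef A) 0 d).
  { eexists. unfold Ef, Q, F21, W. cbn [sum_f_R0 q Nat.sub].
    auto_derive; [nz 0 A | reflexivity]. }
  destruct HE as [d HE].
  apply is_derive_Reals in HE.
  destruct (HE 1 Rlt_0_1) as [del Hdel].
  assert (E0 : 12 / 35 * Ef A 0 = 108 / ((A + 1) * (2 * A + 1)^2)).
  { unfold Ef, F21. rewrite (ser21_eq A 0 HA0 H0), PSeries_0. unfold ca.
    unfold Q. cbn [sum_f_R0 q Nat.sub].
    assert (HW' : W 0 A = (A + 1) * (2 * A + 1) * (2 * A + 3)) by (unfold W; ring).
    rewrite HW'. change (INR 0) with 0. field. repeat split; lra. }
  exists (12 / 35 * (Rabs d + 1)), del. split; [apply cond_pos|].
  intros s [Hs1 Hs2].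
  assert (Hh : Rabs ((Ef A (0 + s) - Ef A 0) / s - d) < 1).
  { apply Hdel; [lra|]. rewrite Rabs_pos_eq; lra. }
  rewrite Rplus_0_l in Hh.
  assert (Hb : Rabs (Ef A s - Ef A 0) <= (Rabs d + 1) * s).
  { replace (Ef A s - Ef A 0) with (s * ((Ef A s - Ef A 0) / s - d) + s * d) by (field; lra).
    eapply Rle_trans; [apply Rabs_triang|].
    rewrite !Rabs_mult, (Rabs_pos_eq s) by lra. nra. }
  replace (Htilde s A - 108 * s ^ 2 / ((A + 1) * (2 * A + 1) ^ 2))
    with (12 / 35 * s^2 * (Ef A s - Ef A 0)).
  2:{ assert (X : 108 * s^2 / ((A + 1) * (2 * A + 1)^2) = s^2 * (12 / 35 * Ef A 0))
        by (rewrite E0; field; repeat split; lra).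
      rewrite X. unfold Htilde, Ef. ring. }
  assert (H2 : 0 <= s^2) by (apply pow_le; lra).
  rewrite Rabs_mult, (Rabs_pos_eq (12/35 * s^2)) by lra.
  replace (12 / 35 * (Rabs d + 1) * s ^ 3) with ((12/35 * s^2) * ((Rabs d + 1) * s)) by ring.
  apply Rmult_le_compat_l; [lra|exact Hb].
Qed.

Lemma Apar_ge1 a lam : 0 < a -> 0 <= lam -> 1 <= Apar a lam.
Proof.
  intros Ha Hl. unfold Apar. rewrite <- sqrt_1 at 1. apply sqrt_le_1_alt.
  assert (0 <= 3 * lam / a^2) by (apply Rdiv_le_0_compat; [lra | apply pow_lt; lra]).
  lra.
Qed.

Lemma exp_in01 a t : 0 < a -> 0 < t -> 0 < exp (- (a * t)) < 1.
Proof. intros. split. apply exp_pos. rewrite <- exp_0. apply exp_increasing. nra. Qed.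

Lemma Y_neg a lam t : 0 < a -> 0 <= lam -> 0 < t -> Y t a lam < 0.
Proof.
  intros Ha Hl Ht. unfold Y; cbv zeta.
  pose proof (Apar_ge1 a lam Ha Hl) as HA.
  set (A := Apar a lam) in *. set (s := exp (- (a * t))) in *.
  assert (Hs : 0 < s < 1) by (apply exp_in01; auto).
  pose proof (W_pos s A HA Hs). pose proof (U_pos s A HA Hs).
  assert (0 < 36 * s * U s A / ((1 - s) * W s A)).
  { destruct Hs as [Hs1 Hs2]. apply Rdiv_lt_0_compat.
    - apply Rmult_lt_0_compat; [lra|auto].
    - apply Rmult_lt_0_compat; lra. }
  assert (- 3 * A - 36 * s * U s A / ((1 - s) * W s A) < 0) by lra.
  nra.
Qed.

Lemma Hsol_solves a lam : 0 < a -> 0 <= lam -> solves_ode a lam (Hsol a lam).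
Proof.
  intros Ha Hl S HS.
  pose proof (ode_core a (Apar a lam) S Ha (Apar_ge1 a lam Ha Hl) HS) as H.
  cbv zeta in H. unfold Y, Hsol. cbv zeta. exact H.
Qed.

Lemma Hsol_tends a lam : 0 < a -> 0 <= lam -> tends_to_0_at_infty (Hsol a lam).
Proof.
  intros Ha Hl eps Heps.
  pose proof (Apar_ge1 a lam Ha Hl) as HA.
  set (A := Apar a lam) in *.
  destruct (asym A HA) as [C [del [Hdel HC]]].
  set (L := 108 / ((A + 1) * (2 * A + 1)^2)).
  assert (HL : 0 < L).
  { unfold L. apply Rdiv_lt_0_compat; [lra|]. apply Rmult_lt_0_compat; [lra|apply pow_lt; lra]. }
  set (K := L + Rabs C + 1).
  assert (Ha3 : 0 < a^3) by (apply pow_lt; lra).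
  assert (HK : 0 < K) by (unfold K; pose proof (Rabs_pos C); lra).
  set (eta := Rmin (Rmin del 1) (eps / (a^3 * K))).
  assert (Heta : 0 < eta).
  { unfold eta. apply Rmin_glb_lt; [apply Rmin_glb_lt; lra|].
    apply Rdiv_lt_0_compat; [lra| apply Rmult_lt_0_compat; lra]. }
  exists (Rmax 0 (- ln eta / a)). intros t Ht.
  assert (Ht0 : 0 < t) by (pose proof (Rmax_l 0 (- ln eta / a)); lra).
  assert (Ht1 : - ln eta / a < t) by (pose proof (Rmax_r 0 (- ln eta / a)); lra).
  set (s := exp (- (a * t))).
  assert (Hs : 0 < s < 1) by (apply exp_in01; auto).
  assert (Hse : s < eta).
  { unfold s. rewrite <- (exp_ln eta Heta). apply exp_increasing.
    apply (Rmult_lt_compat_l a) in Ht1; [|lra]. field_simplify in Ht1; lra. }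
  assert (He1 : eta <= del) by (unfold eta; pose proof (Rmin_l (Rmin del 1) (eps / (a^3 * K))); pose proof (Rmin_l del 1); lra).
  assert (He2 : eta <= eps / (a^3 * K)) by (unfold eta; apply Rmin_r).
  assert (Hsd : 0 < s < del) by lra. specialize (HC s Hsd).
  assert (Hb : Rabs (Htilde s A) <= K * s).
  { assert (s^3 <= s) by (simpl; nra). assert (s^2 <= s) by (simpl; nra).
    assert (0 <= s^3) by (apply pow_le; lra).
    replace (108 * s ^ 2 / ((A + 1) * (2 * A + 1) ^ 2)) with (L * s^2) in HC by (unfold L; field; split; lra).
    pose proof (Rabs_triang_inv (Htilde s A) (L * s^2)) as Htri.
    rewrite (Rabs_pos_eq (L * s^2)) in Htri by (apply Rmult_le_pos; [lra| apply pow_le; lra]).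
    assert (C * s^3 <= Rabs C * s) by (pose proof (Rle_abs C); pose proof (Rabs_pos C); nra).
    unfold K. nra. }
  unfold Hsol. fold A. fold s.
  rewrite Rabs_mult, (Rabs_pos_eq (a^3)) by lra.
  apply Rle_lt_trans with (a^3 * (K * s)); [apply Rmult_le_compat_l; lra|].
  assert (K * s < K * (eps / (a^3 * K))) by (apply Rmult_lt_compat_l; lra).
  replace eps with (a^3 * (K * (eps / (a^3 * K)))) by (field; split; lra).
  apply Rmult_lt_compat_l; lra.
Qed.

Lemma unique_sol a lam (G : R -> R) : 0 < a -> 0 <= lam ->
  solves_ode a lam G -> tends_to_0_at_infty G ->
  forall S, 0 < S -> G S = Hsol a lam S.
Proof.
  intros Ha Hl HG HGt S0 HS0.
  pose proof (Hsol_solves a lam Ha Hl) as HH.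
  pose proof (Hsol_tends a lam Ha Hl) as HHt.
  set (H := Hsol a lam) in *.
  set (f := fun x => (G x - H x) * (G x - H x)).
  set (df := fun x => - (4/3) * Y x a lam * ((G x - H x) * (G x - H x))).
  assert (Hder : forall x, 0 < x -> derivable_pt_lim f x (df x)).
  { intros x Hx.
    destruct (HG x Hx) as [dY1 [dG [HY1 [HdG E1]]]].
    destruct (HH x Hx) as [dY2 [dH [HY2 [HdH E2]]]].
    pose proof (uniqueness_limite _ _ _ _ HY1 HY2) as EY. subst dY2.
    pose proof (derivable_pt_lim_minus G H x dG dH HdG HdH) as HD.
    pose proof (derivable_pt_lim_mult _ _ x _ _ HD HD) as HM.
    replace (df x) with ((dG - dH) * (G x - H x) + (G x - H x) * (dG - dH)).
    - exact HM.
    - unfold df. nra. }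
  assert (Hmono : forall t, S0 < t -> f S0 <= f t).
  { intros t Ht.
    destruct (MVT_gen f S0 t df) as [c [Hc Eq]].
    - intros x Hx. apply is_derive_Reals, Hder.
      rewrite Rmin_left in Hx by lra. lra.
    - intros x Hx. rewrite Rmin_left in Hx by lra.
      apply (derivable_continuous_pt f x (exist _ (df x) (Hder x ltac:(lra)))).
    - rewrite Rmin_left, Rmax_right in Hc by lra.
      pose proof (Y_neg a lam c Ha Hl ltac:(lra)).
      assert (0 <= df c) by (unfold df; pose proof (Rle_0_sqr (G c - H c)); unfold Rsqr in *; nra).
      nra. }
  destruct (Req_dec (G S0 - H S0) 0) as [Z|NZ]; [lra|exfalso].
  set (e := Rabs (G S0 - H S0) / 4).
  assert (He : 0 < e) by (unfold e; pose proof (Rabs_pos_lt _ NZ); lra).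
  destruct (HGt e He) as [M1 HM1]. destruct (HHt e He) as [M2 HM2].
  set (t := Rmax S0 (Rmax M1 M2) + 1).
  assert (t1 : S0 < t) by (unfold t; pose proof (Rmax_l S0 (Rmax M1 M2)); lra).
  assert (t2 : M1 < t) by (unfold t; pose proof (Rmax_r S0 (Rmax M1 M2)); pose proof (Rmax_l M1 M2); lra).
  assert (t3 : M2 < t) by (unfold t; pose proof (Rmax_r S0 (Rmax M1 M2)); pose proof (Rmax_r M1 M2); lra).
  specialize (HM1 t t2). specialize (HM2 t t3). specialize (Hmono t t1).
  unfold f in Hmono.
  assert (Rabs (G t - H t) < 2 * e).
  { unfold Rminus. eapply Rle_lt_trans; [apply Rabs_triang|]. rewrite Rabs_Ropp. lra. }
  pose proof (Rabs_pos (G t - H t)).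
  assert (Hq : (G t - H t) * (G t - H t) = Rabs (G t - H t) * Rabs (G t - H t))
    by (rewrite <- Rabs_mult, Rabs_pos_eq; [reflexivity| nra]).
  assert (Hp : (G S0 - H S0) * (G S0 - H S0) = Rabs (G S0 - H S0) * Rabs (G S0 - H S0))
    by (rewrite <- Rabs_mult, Rabs_pos_eq; [reflexivity| nra]).
  unfold e in *. nra.
Qed.

Theorem mainTheorem3 :
  (forall a lam, 0 < a -> 0 <= lam ->
     solves_ode a lam (Hsol a lam) /\
     tends_to_0_at_infty (Hsol a lam) /\
     (forall G : R -> R, solves_ode a lam G -> tends_to_0_at_infty G ->
        forall S, 0 < S -> G S = Hsol a lam S)) /\
  (forall A, 1 <= A ->
     exists C delta, 0 < delta /\
       forall s, 0 < s < delta ->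
         Rabs (Htilde s A - 108 * s^2 / ((A + 1) * (2 * A + 1)^2)) <= C * s^3).
Proof.
  split.
  - intros a lam Ha Hl. split; [|split].
    + apply Hsol_solves; auto.
    + apply Hsol_tends; auto.
    + intros G HG HGt. apply unique_sol; auto.
  - exact asym.
Qed.
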